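(* If a quasi-discrete closure model $\mathcal{M}=((X,\mathcal{C}_R),\mathcal{V})$ is finitely closed and finitely backward closed, then for all $x_1,x_2\in X$, $x_1\equiv_{SLCS}x_2$ implies $x_1\simeq x_2$.
   Context: Quasi-discrete closure model: $\mathcal{C}_R(A)=A\cup\{x\mid\exists a\in A.\ aRx\}$, $\vec{\mathcal{C}}(x)=\mathcal{C}_R(\{x\})$, $\overleftarrow{\mathcal{C}}(x)=\mathcal{C}_{R^{-1}}(\{x\})$, $\mathcal{V}:AP\to\mathcal{P}(X)$, $\mathcal{V}^{-1}(x)=\{p\mid x\in\mathcal{V}(p)\}$; finitely (backward) closed: all $\vec{\mathcal{C}}(x)$ (resp. $\overleftarrow{\mathcal{C}}(x)$) finite. A function $f$ between closure spaces $(X_1,\mathcal{C}_1),(X_2,\mathcal{C}_2)$ is continuous if $f[\mathcal{C}_1(A)]\subseteq\mathcal{C}_2(f[A])$ for all $A$. A path is a continuous function $\pi:(\mathbb{N},\mathcal{C}_{succ})\to(X,\mathcal{C}_R)$, where $\mathcal{C}_{succ}$ is the closure based on the successor relation $\{(n,n+1)\}$. SLCS formulas: $\Phi::=p\mid\neg\Phi\mid\Phi\lor\Phi\mid\vec\rho\,\Phi_1[\Phi_2]\mid\overleftarrow\rho\,\Phi_1[\Phi_2]$ with $p\in AP$. Semantics: $x\models p$ iff $x\in\mathcal{V}(p)$; Boolean cases standard; $x\models\vec\rho\,\Phi_1[\Phi_2]$ iff there are a path $\pi$ and $\ell\in\mathbb{N}$ with $\pi(0)=x$, $\pi(\ell)\models\Phi_1$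 and $\pi(j)\models\Phi_2$ for all $0<j<\ell$; $x\models\overleftarrow\rho\,\Phi_1[\Phi_2]$ iff there are a path $\pi$ and $\ell$ with $\pi(\ell)=x$, $\pi(0)\models\Phi_1$ and $\pi(j)\models\Phi_2$ for all $0<j<\ell$. $x_1\equiv_{SLCS}x_2$ iff they satisfy the same SLCS formulas. Class-based bisimilarity $\simeq$: union of all non-empty equivalence relations $B$ such that $(x_1,x_2)\in B$ implies $\mathcal{V}^{-1}(x_1)=\mathcal{V}^{-1}(x_2)$ and for all $C\in X/B$, $\vec{\mathcal{C}}(x_1)\cap C\neq\emptyset\iff\vec{\mathcal{C}}(x_2)\cap C\neq\emptyset$ and $\overleftarrow{\mathcal{C}}(x_1)\cap C\neq\emptyset\iff\overleftarrow{\mathcal{C}}(x_2)\cap C\neq\emptyset$. *)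

(* Defs.v *)
From Stdlib Require Import List Arith.
Set Implicit Arguments.

Definition closureR (T : Type) (R : T -> T -> Prop) (A : T -> Prop) : T -> Prop :=
  fun x => A x \/ exists a, A a /\ R a x.

Definition image (T U : Type) (f : T -> U) (A : T -> Prop) : U -> Prop :=
  fun y => exists x, A x /\ f x = y.

Definition continuous (T U : Type) (C1 : (T -> Prop) -> T -> Prop)
  (C2 : (U -> Prop) -> U -> Prop) (f : T -> U) : Prop :=
  forall A : T -> Prop, forall y, image f (C1 A) y -> C2 (image f A) y.

Definition succ_rel (n m : nat) : Prop := m = S n.

Definition is_path (X : Type) (R : X -> X -> Prop) (p : nat -> X) : Prop :=
  continuous (closureR succ_rel) (closureR R) p.

Definition fwd (X : Type) (R : X -> X -> Prop) (x : X) : X -> Prop :=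
  closureR R (fun y => y = x).
Definition bwd (X : Type) (R : X -> X -> Prop) (x : X) : X -> Prop :=
  closureR (fun a b => R b a) (fun y => y = x).

Definition finite_set (X : Type) (A : X -> Prop) : Prop :=
  exists l : list X, forall y, A y -> In y l.

Definition finitely_closed (X : Type) (R : X -> X -> Prop) : Prop :=
  forall x, finite_set (fwd R x).
Definition finitely_backward_closed (X : Type) (R : X -> X -> Prop) : Prop :=
  forall x, finite_set (bwd R x).

Inductive slcs (AP : Type) : Type :=
| FAtom : AP -> slcs AP
| FNeg : slcs AP -> slcs AP
| FOr : slcs AP -> slcs AP -> slcs AP
| FRhoF : slcs AP -> slcs AP -> slcs AP
| FRhoB : slcs AP -> slcs AP -> slcs AP.

Fixpoint sat (X AP : Type) (R : X -> X -> Prop) (V : AP -> X -> Prop)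
  (f : slcs AP) (x : X) {struct f} : Prop :=
  match f with
  | FAtom p => V p x
  | FNeg g => ~ sat R V g x
  | FOr g h => sat R V g x \/ sat R V h x
  | FRhoF g h => exists (p : nat -> X) (l : nat), is_path R p /\ p 0 = x /\
      sat R V g (p l) /\ (forall j, 0 < j -> j < l -> sat R V h (p j))
  | FRhoB g h => exists (p : nat -> X) (l : nat), is_path R p /\ p l = x /\
      sat R V g (p 0) /\ (forall j, 0 < j -> j < l -> sat R V h (p j))
  end.

Definition slcs_equiv (X AP : Type) (R : X -> X -> Prop) (V : AP -> X -> Prop)
  (x1 x2 : X) : Prop :=
  forall f : slcs AP, sat R V f x1 <-> sat R V f x2.

Definition equivalence_rel (X : Type) (B : X -> X -> Prop) : Prop :=
  (forall x, B x x) /\ (forall x y, B x y -> B y x) /\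
  (forall x y z, B x y -> B y z -> B x z).

(* Equivalence classes of B are the sets {w | B z w}. *)
Definition class_based_bisim (X AP : Type) (R : X -> X -> Prop) (V : AP -> X -> Prop)
  (B : X -> X -> Prop) : Prop :=
  forall x1 x2, B x1 x2 ->
    (forall p, V p x1 <-> V p x2) /\
    (forall z, (exists w, fwd R x1 w /\ B z w) <-> (exists w, fwd R x2 w /\ B z w)) /\
    (forall z, (exists w, bwd R x1 w /\ B z w) <-> (exists w, bwd R x2 w /\ B z w)).

Definition cb_bisimilar (X AP : Type) (R : X -> X -> Prop) (V : AP -> X -> Prop)
  (x1 x2 : X) : Prop :=
  exists B : X -> X -> Prop, (exists a b, B a b) /\ equivalence_rel B /\
    class_based_bisim R V B /\ B x1 x2.

(* Main.v *)
Require Import Defs.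
From Stdlib Require Import List Arith Lia Classical.

Section S.
Variables (X AP : Type) (R : X -> X -> Prop) (V : AP -> X -> Prop).

Definition FAnd (f g : slcs AP) := FNeg (FOr (FNeg f) (FNeg g)).

Lemma sat_and f g x : sat R V (FAnd f g) x <-> sat R V f x /\ sat R V g x.
Proof. simpl. split; [intros H; split; apply NNPP; tauto | tauto]. Qed.

Lemma build (T : slcs AP) (HT : forall x, sat R V T x) z (l : list X) :
  exists F, sat R V F z /\ forall y, In y l -> ~ slcs_equiv R V z y -> ~ sat R V F y.
Proof.
  induction l as [|y l [F [HF1 HF2]]].
  - exists T. split; [apply HT | intros y []].
  - destruct (classic (slcs_equiv R V z y)) as [E|E].
    + exists F. split; auto. intros y' [<-|Hi] Ne; [contradiction|auto].
    + unfold slcs_equiv in E. apply not_all_ex_not in E as [f Hf].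
      destruct (classic (sat R V f z)) as [Hz|Hz].
      * exists (FAnd F f). split; [apply sat_and; auto|].
        intros y' [<-|Hi] Ne Hs; apply sat_and in Hs as [H1 H2].
        -- apply Hf; tauto.
        -- eapply HF2; eauto.
      * exists (FAnd F (FNeg f)). split; [apply sat_and; simpl; auto|].
        intros y' [<-|Hi] Ne Hs; apply sat_and in Hs as [H1 H2]; simpl in H2.
        -- apply Hf; tauto.
        -- eapply HF2; eauto.
Qed.

Definition p2 (a b : X) : nat -> X := fun n => match n with 0 => a | _ => b end.

Lemma p2_path a b : (a = b \/ R a b) -> is_path R (p2 a b).
Proof.
  intros Hab A y [n [[Hn|[m [Hm ->]]] <-]].
  - left. exists n; auto.
  - destruct m as [|m].
    + simpl. destruct Hab as [<-|Hr].
      * left. exists 0; auto.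
      * right. exists a. split; auto. exists 0; auto.
    + left. exists (S m); auto.
Qed.

Lemma path_step p : is_path R p -> p 1 = p 0 \/ R (p 0) (p 1).
Proof.
  intros Hp. destruct (Hp (fun n => n = 0) (p 1)) as [[n [-> E]]|[b [[n [-> <-]] Hr]]].
  - exists 1. split; [right; exists 0; split; reflexivity|reflexivity].
  - left; auto.
  - right; auto.
Qed.

Variable T : slcs AP.
Hypothesis HT : forall x, sat R V T x.
Let Bot := FNeg T.

Lemma short p l : (forall j, 0 < j -> j < l -> sat R V Bot (p j)) -> l = 0 \/ l = 1.
Proof.
  intros H. destruct l as [|[|l]]; auto. exfalso. apply (H 1); [lia|lia|apply HT].
Qed.

Lemma fwd_trans x1 x2 w z : slcs_equiv R V x1 x2 -> finite_set (fwd R x2) ->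
  fwd R x1 w -> slcs_equiv R V z w -> exists w', fwd R x2 w' /\ slcs_equiv R V z w'.
Proof.
  intros E [lst Hl] Hw Ezw. apply NNPP. intros Hn.
  destruct (build _ HT z lst) as [F [HF1 HF2]].
  assert (Hx1 : sat R V (FRhoF F Bot) x1).
  { exists (p2 x1 w), 1. repeat split.
    - apply p2_path. destruct Hw as [->|[a [-> Hr]]]; auto.
    - simpl. apply Ezw; auto.
    - intros; lia. }
  apply E in Hx1 as [p [l [Hp [H0 [HF Hj]]]]].
  destruct (short p l Hj) as [->| ->].
  - apply (HF2 (p 0)); [apply Hl; left; auto| |auto].
    intros Ez. apply Hn. exists (p 0). split; auto. left; auto.
  - assert (Hf : fwd R x2 (p 1)).
    { destruct (path_step p Hp) as [e|r]; [left; congruence|right; exists x2; subst; auto]. }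
    apply (HF2 (p 1)); auto. intros Ez. apply Hn. eauto.
Qed.

Lemma bwd_trans x1 x2 w z : slcs_equiv R V x1 x2 -> finite_set (bwd R x2) ->
  bwd R x1 w -> slcs_equiv R V z w -> exists w', bwd R x2 w' /\ slcs_equiv R V z w'.
Proof.
  intros E [lst Hl] Hw Ezw. apply NNPP. intros Hn.
  destruct (build _ HT z lst) as [F [HF1 HF2]].
  assert (Hx1 : sat R V (FRhoB F Bot) x1).
  { exists (p2 w x1), 1. repeat split.
    - apply p2_path. destruct Hw as [->|[a [-> Hr]]]; auto.
    - simpl. apply Ezw; auto.
    - intros; lia. }
  apply E in Hx1 as [p [l [Hp [H0 [HF Hj]]]]].
  destruct (short p l Hj) as [->| ->].
  - apply (HF2 (p 0)); [apply Hl; left; auto| |auto].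
    intros Ez. apply Hn. exists (p 0). split; auto. left; auto.
  - assert (Hf : bwd R x2 (p 0)).
    { destruct (path_step p Hp) as [e|r]; [left; congruence|right; exists x2; subst; auto]. }
    apply (HF2 (p 0)); auto. intros Ez. apply Hn. eauto.
Qed.

End S.

Theorem lemma4 (X AP : Type) (R : X -> X -> Prop) (V : AP -> X -> Prop) :
  finitely_closed R -> finitely_backward_closed R ->
  forall x1 x2 : X, slcs_equiv R V x1 x2 -> cb_bisimilar R V x1 x2.
Proof.
  intros Hf Hb x1 x2 E.
  destruct (classic (exists a : AP, True)) as [[a _]|NA].
  - set (T := FOr (FAtom a) (FNeg (FAtom a))).
    assert (HT : forall x, sat R V T x) by (intros x; simpl; tauto).
    exists (slcs_equiv R V). split; [exists x1, x2; auto|]. split.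
    { split; [intros x f; tauto|]. split; [intros x y H f; symmetry; apply H|].
      intros x y z H1 H2 f. rewrite (H1 f). apply H2. }
    split; auto.
    intros y1 y2 Ey. split; [intros p; apply (Ey (FAtom p))|]. split; intros z; split.
    + intros [w [Hw Ez]]. eapply fwd_trans; eauto.
    + intros [w [Hw Ez]]. eapply fwd_trans; eauto. intros f; symmetry; apply Ey.
    + intros [w [Hw Ez]]. eapply bwd_trans; eauto.
    + intros [w [Hw Ez]]. eapply bwd_trans; eauto. intros f; symmetry; apply Ey.
  - exists (fun _ _ => True). split; [exists x1, x1; auto|]. split.
    { split; auto. }
    split; auto.
    intros y1 y2 _. split; [intros p; exfalso; apply NA; exists p; auto|].
    split; intros z; split; intros _.
    + exists y2; split; [left; auto|auto].
    + exists y1; split; [left; auto|auto].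
    + exists y2; split; [left; auto|auto].
    + exists y1; split; [left; auto|auto].
Qed.
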